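(* For every positive integer $n$, any deterministic finite automaton separating $\mathrm{EvenCycles}_{n,2}$ from $\mathrm{OddCycles}_{n,2}$ has at least $n+1$ states.
   Context: Let $\Sigma=[n]\times[d]$ where $[m]=\{1,\dots,m\}$. A deterministic finite automaton over $\Sigma$ consists of a finite set $Q$ of states, an initial state $q_{start}\in Q$ and a transition function $\delta\colon Q\times\Sigma\to Q$, extended to words in the usual way. For disjoint $A,B\subseteq\Sigma^{\mathbb N}$, the automaton separates $A$ from $B$ if there is a state $q_{accept}$ such that for every infinite word $w=w_1w_2\ldots\in\Sigma^{\mathbb N}$: if $w\in A$ then there is $i_0$ with $\delta(q_{start},w_1\ldots w_i)=q_{accept}$ for all $i\ge i_0$; if $w\in B$ then $\delta(q_{start},w_1\ldots w_i)\neq q_{accept}$ for all $i\ge 1$. A game graph with $n$ nodes and $d$ priorities is a pair $G=\langle E,\pi\rangle$ where $E\subseteq[n]^2$ is a set of directed edges (loops allowed, no parallel edges) such that every node $u\in[n]$ has at least one outgoing edge, and $\pi\colon E\to[d]$. $G$ is even (resp. odd) if for every $k\ge1$ and every $v_1,\dots,v_k$ with $(v_1,v_2),\dots,(v_{k-1},v_k),(v_k,v_1)\in E$, the maximum of $\pi$ over these $k$ edges is even (resp. odd). $\mathrm{EvenCycles}_{n,d}$ (resp. $\mathrm{OddCycles}_{n,d}$) is the set of infinite words $(v_1,l_1)(v_2,l_2)\ldots\in\Sigma^{\mathbb N}$ for which there exists an even (resp. odd) game graph $G=\langle E,\pi\rangle$ with at most $n$ nodes and $d$ priorities such that $(v_i,v_{i+1})\in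 E$ and $\pi((v_i,v_{i+1}))=l_i$ for all $i\ge1$. *)

(* Defs.v *)
From mathcomp Require Import all_boot.
Set Implicit Arguments. Unset Strict Implicit. Unset Printing Implicit Defensive.

(* Nodes [n] are represented by 'I_n (node v+1 <-> ordinal v);
   priorities [d] = {1..d} are represented by 'I_d, where the ordinal l
   stands for the priority l+1 (see [prio]). *)
Definition Sigma (n d : nat) : finType := ('I_n * 'I_d)%type.

Definition prio (d : nat) (l : 'I_d) : nat := (val l).+1.

(* Run of a DFA: [run delta q0 w i] = delta(q0, w_1 ... w_i), where the
   infinite word w_1 w_2 ... is [w 0, w 1, ...]. *)
Fixpoint run (Q A : Type) (delta : Q -> A -> Q) (q0 : Q) (w : nat -> A)
  (i : nat) : Q :=
  match i with
  | 0 => q0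
  | i'.+1 => delta (run delta q0 w i') (w i')
  end.

Definition separates (Q A : Type) (q0 : Q) (delta : Q -> A -> Q)
  (LA LB : (nat -> A) -> Prop) : Prop :=
  exists qacc : Q, forall w : nat -> A,
    (LA w -> exists i0, forall i, i0 <= i -> run delta q0 w i = qacc) /\
    (LB w -> forall i, 1 <= i -> run delta q0 w i <> qacc).

(* A game graph with nodes [n] and priorities [d]: an edge relation E in
   which every node has an outgoing edge, and a labelling pi of edges
   (only its values on edges of E are relevant). *)
Definition game_graph (n d : nat) (E : rel 'I_n) (pi : 'I_n -> 'I_n -> 'I_d)
  : Prop := forall u : 'I_n, exists v, E u v.

Definition cycle_max (n d : nat) (pi : 'I_n -> 'I_n -> 'I_d)
  (k : nat) (v : nat -> 'I_n) : nat :=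
  \max_(i < k) prio (pi (v i) (v (i.+1 %% k))).

Definition is_cycle (n : nat) (E : rel 'I_n) (k : nat) (v : nat -> 'I_n)
  : Prop := forall i, i < k -> E (v i) (v (i.+1 %% k)).

Definition even_graph (n d : nat) (E : rel 'I_n) (pi : 'I_n -> 'I_n -> 'I_d)
  : Prop := forall k (v : nat -> 'I_n), 1 <= k -> is_cycle E k v ->
    ~~ odd (cycle_max pi k v).

Definition odd_graph (n d : nat) (E : rel 'I_n) (pi : 'I_n -> 'I_n -> 'I_d)
  : Prop := forall k (v : nat -> 'I_n), 1 <= k -> is_cycle E k v ->
    odd (cycle_max pi k v).

Definition word_in_graph (n d : nat) (E : rel 'I_n) (pi : 'I_n -> 'I_n -> 'I_d)
  (w : nat -> Sigma n d) : Prop :=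
  forall i, E (w i).1 (w i.+1).1 /\ pi (w i).1 (w i.+1).1 = (w i).2.

Definition EvenCycles (n d : nat) (w : nat -> Sigma n d) : Prop :=
  exists (E : rel 'I_n) (pi : 'I_n -> 'I_n -> 'I_d),
    game_graph E pi /\ even_graph E pi /\ word_in_graph E pi w.

Definition OddCycles (n d : nat) (w : nat -> Sigma n d) : Prop :=
  exists (E : rel 'I_n) (pi : 'I_n -> 'I_n -> 'I_d),
    game_graph E pi /\ odd_graph E pi /\ word_in_graph E pi w.

(* Main.v *)
Require Import Defs.
From mathcomp Require Import all_boot.
From mathcomp Require Import zify.

Set Implicit Arguments. Unset Strict Implicit. Unset Printing Implicit Defensive.

Definition two : 'I_2 := @ord_max 1.
Definition one : 'I_2 := @ord0 1.

Lemma run_shift (Q A : Type) (d : Q -> A -> Q) (q q' : Q) (w w' : nat -> A) a b m :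
  run d q w a = run d q' w' b -> (forall r, r < m -> w (a + r) = w' (b + r)) ->
  forall r, r <= m -> run d q w (a + r) = run d q' w' (b + r).
Proof.
move=> H0 Hw; elim=> [|r IH] Hr; first by rewrite !addn0.
by rewrite !addnS /= IH ?(ltnW Hr) // Hw.
Qed.

Lemma max_const k c : \max_(i < k.+1) c = c.
Proof. elim: k => [|k IH]; first by rewrite big_ord_recr big_ord0 /= max0n.
by rewrite big_ord_recr IH /= maxnn. Qed.

Lemma all2_even n (w : nat -> Sigma n 2) :
  (forall i, (w i).2 = two) -> EvenCycles w.
Proof.
move=> H; exists (fun _ _ => true), (fun _ _ => two); split; last split.
- by move=> u; exists u.
- move=> [//|k] v _ _; by rewrite /cycle_max max_const.
- by move=> i; split => //; rewrite H.
Qed.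

Lemma cyc_eq n (E : rel 'I_n) k v : is_cycle E k v ->
  (forall u w, E u w -> u <= w) -> forall i, i < k -> val (v i) = val (v (i.+1 %% k)).
Proof.
move=> hc hm i ik; have le := hm _ _ (hc i ik).
case: (ltnP (v i) (v (i.+1 %% k))) => h; last by apply/eqP; rewrite eqn_leq le h.
have k0 : 0 < k by apply: leq_ltn_trans (leq0n i) ik.
have step: forall j, v i < v ((i + j.+1) %% k).
  elim=> [|j IH]; first by rewrite addn1.
  apply: (leq_trans IH); have hj : (i + j.+1) %% k < k := ltn_pmod _ k0.
  by have := hm _ _ (hc _ hj); rewrite -(addn1 ((i + j.+1) %% k)) modnDml addn1 -addnS.
by have := step k.-1; rewrite prednK // modnDr modn_small // ltnn.
Qed.

Lemma mono_odd n (w : nat -> Sigma n 2) :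
  (forall i, (w i).1 <= (w i.+1).1 /\
     (w i).2 = if (w i).1 < (w i.+1).1 then two else one) -> OddCycles w.
Proof.
move=> H; exists (fun u v : 'I_n => u <= v), (fun u v => if u < v then two else one).
split; last split.
- by move=> u; exists u.
- move=> k v hk hc; have eqv := cyc_eq hc (fun u w h => h).
  rewrite /cycle_max (eq_bigr (fun _ => 1)); last first.
    by move=> i _; rewrite eqv // ltnn.
  by case: k hk {eqv hc} => [//|k] _; rewrite max_const.
- by move=> i; case: (H i) => h1 h2; split => //; rewrite h2.
Qed.

Lemma pump_contra n (Q : finType) (q0 qacc : Q) (d : Q -> Sigma n 2 -> Q)
  (w : nat -> Sigma n 2) a p :
  (forall v, EvenCycles v -> exists i0, forall i, i0 <= i -> run d q0 v i = qacc) ->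
  (forall i, (w i).2 = two) -> 0 < p -> run d q0 w a = run d q0 w (a + p) ->
  run d q0 w a <> qacc -> False.
Proof.
move=> He H2 hp hper hna.
pose P k := if k < a then w k else w (a + (k - a) %% p).
have HP : forall m, run d q0 P (a + m * p) = run d q0 w a.
  elim=> [|m IH].
    rewrite mul0n addn0.
    have := @run_shift _ _ d q0 q0 P w 0 0 a erefl.
    apply => // r hr; by rewrite /P hr.
  rewrite mulSnr addnA hper.
  apply: (run_shift (m := p) IH) => // r hr.
  rewrite /P ltnNge -addnA leq_addr /= addKn.
  by rewrite modnMDl (modn_small hr).
have P2 : forall k, (P k).2 = two by move=> k; rewrite /P; case: ifP => _; apply: H2.
have [i0 Hi0] := He P (all2_even P2).
apply: hna; rewrite -(HP i0); apply: Hi0.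
exact: leq_trans (leq_pmulr _ hp) (leq_addl _ _).
Qed.

Lemma lemC n (Q : finType) (q0 qacc : Q) (d : Q -> Sigma n 2 -> Q)
  (w : nat -> Sigma n 2) p N :
  (forall v, EvenCycles v -> exists i0, forall i, i0 <= i -> run d q0 v i = qacc) ->
  (forall i, (w i).2 = two) ->
  (forall i, i < N -> run d q0 w (p + i) <> qacc) -> N.+1 <= #|Q|.
Proof.
move=> He H2 Hnq.
pose g (i : 'I_N.+1) := if val i < N then run d q0 w (p + i) else qacc.
suff H : forall i j : 'I_N.+1, i < j -> g i <> g j.
  rewrite -[N.+1]card_ord; apply: (@leq_card _ _ g) => i j E.
  case: (ltngtP i j) => h; [by have := H _ _ h| by have := H _ _ h; rewrite E|].
  exact: val_inj.
move=> i j lt; have ilt : i < N by apply: leq_trans lt (ltn_ord j).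
rewrite /g ilt; case: ifP => hj E; last exact: Hnq i ilt E.
apply: (@pump_contra n Q q0 qacc d w (p + i) (j - i) He H2); first by rewrite subn_gt0.
  by rewrite -addnA subnKC ?(ltnW lt).
exact: Hnq.
Qed.

Theorem proposition5 (n : nat) (Hn : 0 < n) (Q : finType) (q0 : Q)
  (delta : Q -> Sigma n 2 -> Q) :
  separates q0 delta (@EvenCycles n 2) (@OddCycles n 2) ->
  n.+1 <= #|Q|.
Proof.
case: n Hn delta => [//|n'] _ delta [qacc Hs].
have He : forall w, EvenCycles w -> exists i0, forall i, i0 <= i -> run delta q0 w i = qacc
  := fun w h => (Hs w).1 h.
have Ho : forall w, OddCycles w -> forall i, 1 <= i -> run delta q0 w i <> qacc
  := fun w h => (Hs w).2 h.
pose w1 (j : nat) : Sigma n'.+1 2 := (inord (minn j n'), if j < n' then two else one).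
have w1P : forall i, (w1 i).1 <= (w1 i.+1).1 /\
     (w1 i).2 = if (w1 i).1 < (w1 i.+1).1 then two else one.
  move=> i; rewrite /w1 /= !inordK ?ltnS ?geq_minr //.
  case: (ltnP i n') => h.
    have -> : minn i.+1 n' = i.+1 by lia.
    by rewrite leqnSn ltnSn.
  have -> : minn i.+1 n' = n' by lia.
  by rewrite leqnn ltnn.
have w1odd : OddCycles w1 by apply: mono_odd.
pose a2 j : Sigma n'.+1 2 := ((w1 j).1, two).
have a22 : forall i, (a2 i).2 = two by [].
have a2w1 : forall j, j < n' -> a2 j = w1 j by move=> j hj; rewrite /a2 /w1 /= hj.
have ra2 : forall i, i <= n' -> run delta q0 a2 i = run delta q0 w1 i.
  move=> i hi; have := @run_shift _ _ delta q0 q0 a2 w1 0 0 n' erefl.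
  by apply => // r hr; apply: a2w1.
pose X j : Sigma n'.+1 2 := if j is j'.+1 then w1 j' else (ord0, one).
have Xodd : OddCycles X.
  apply: mono_odd => [[|i]] /=; last exact: w1P.
  by rewrite inordK ?ltnS ?geq_minr // min0n.
case: (eqVneq q0 qacc) => hq0; last first.
  apply: (@lemC _ Q q0 qacc delta a2 0 n'.+1 He a22) => i hi.
  rewrite add0n; case: i hi => [|i] hi; first exact/eqP.
  rewrite ra2 ?ltnS //; exact: Ho.
case: (leqP n'.+2 #|Q|) => // HQ; exfalso.
suff: n'.+2 <= #|Q| by rewrite leqNgt HQ.
pose g (i : 'I_n'.+2) := if val i < n'.+1 then run delta q0 a2 i else run delta q0 X 1.
suff H : forall i j : 'I_n'.+2, i < j -> g i <> g j.
  rewrite -[n'.+2]card_ord; apply: (@leq_card _ _ g) => i j E.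
  case: (ltngtP i j) => h; [by have := H _ _ h| by have := H _ _ h; rewrite E|].
  exact: val_inj.
move=> i j lt; have ilt : i < n'.+1 by apply: leq_trans lt (ltn_ord j).
rewrite /g ilt; case: ifP => hj E.
  apply: (@pump_contra _ Q q0 qacc delta a2 i (j - i) He a22); first by rewrite subn_gt0.
    by rewrite subnKC ?(ltnW lt).
  rewrite E ra2; first exact: (Ho _ w1odd _ (leq_ltn_trans (leq0n _) lt)).
  by [].
case: (posnP i) => [i0|ipos].
  by move: E; rewrite i0 /= hq0 => E; apply: (Ho X Xodd 1 erefl); rewrite /= hq0 -E.
pose Z j := if j < i then a2 j else a2 (j - i).
suff: n'.+2 <= #|Q| by rewrite leqNgt HQ.
apply: (@lemC _ Q q0 qacc delta Z i n'.+1 He) => [k|r hr].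
  by rewrite /Z; case: ifP.
have base : run delta q0 Z i = run delta q0 X 1.
  rewrite -E; have := @run_shift _ _ delta q0 q0 Z a2 0 0 i erefl.
  by apply => // r' hr'; rewrite /Z hr'.
rewrite (run_shift base (m := n')) ?add1n; first by apply: Ho.
  move=> r' hr'; rewrite /Z ltnNge leq_addr /= addKn. rewrite add0n.
  exact: a2w1.
by rewrite -ltnS.
Qed.
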